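(* Let $L=\{(x,\,y,\,y+z): x,y\in B,\ z\in C_8\}\subset E^{24}$. Then $L$ is contained in the set of even-weight words, and $\chi_L$ is a perfect coloring of the halved cube $\tfrac12 H^{0}_{24}$ with parameters $((28,248)(8,268))$.
   Context: $E^n$ is the set of binary words of length $n$ with coordinatewise addition mod $2$. $\tfrac12 H^{0}_{24}$ is the graph on the even-weight words of $E^{24}$, adjacent iff at Hamming distance exactly $2$ (degree $276$). $B\subset E^8$ is the set of even-weight words of length $8$ (the $(8,128,2)$-code containing $00000000$). $C_8\subset E^8$ is the linear span of $11111111$ and of the seven words obtained from $00101110$ by cyclically permuting its first seven coordinates (a linear $(8,16,4)$-code). (The paper writes $C_1$ in the definition of $L$; it denotes an $(8,16,4)$-code such as $C_8$.) For a set $C$, $\chi_C$ is a perfect coloring with parameters $((a,b)(c,d))$ if every vertex of $C$ has exactly $a$ neighbours in $C$ and $b$ outside, and every vertex outside $C$ has exactly $c$ neighbours in $C$ and $d$ outside. *)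

(* Defs.v *)
From mathcomp Require Import all_boot.
Set Implicit Arguments. Unset Strict Implicit. Unset Printing Implicit Defensive.

Definition word (n : nat) := {ffun 'I_n -> bool}.

Definition wt n (x : word n) : nat := #|[set i | x i]|.
Definition dist n (x y : word n) : nat := #|[set i | x i != y i]|.
Definition wadd n (x y : word n) : word n := [ffun i => x i (+) y i].
Definition zero_word n : word n := [ffun => false].

(* even-weight words of E^n (vertex set of the halved cube) *)
Definition Even n : {set word n} := [set x | ~~ odd (wt x)].

Definition halved_adj n (x y : word n) : bool := dist x y == 2.

Definition B : {set word 8} := Even 8.

Definition of_bits n (s : seq bool) : word n := [ffun i : 'I_n => nth false s i].

(* 00101110 with its first seven coordinates cyclically shifted k times *)
Definition gen_base : seq bool := [:: false; false; true; false; true; true; true; false].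
Definition cyc_gen (k : 'I_7) : word 8 :=
  [ffun i : 'I_8 => if i < 7 then nth false gen_base ((i + k) %% 7) else nth false gen_base 7].
Definition all_ones n : word n := [ffun => true].

Definition gens : seq (word 8) := all_ones 8 :: [seq cyc_gen k | k <- enum 'I_7].

Definition span_of n (g : seq (word n)) : {set word n} :=
  [set x | [exists m : (size g).-tuple bool,
     x == foldr (@wadd n) (zero_word n) (mask m g)]].

Definition C8 : {set word 8} := span_of gens.

Definition cat3 (x y w : word 8) : word 24 :=
  [ffun i : 'I_24 => if i < 8 then x (inord i)
                     else if i < 16 then y (inord (i - 8)) else w (inord (i - 16))].

Definition L : {set word 24} :=
  [set v | [exists x in B, exists y in B, exists z in C8, v == cat3 x y (wadd y z)]].

Definition perfect_coloring (T : finType) (V : {set T}) (adj : rel T)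
    (C : {set T}) (a b c d : nat) : Prop :=
  C \subset V /\
  (forall v, v \in V -> v \in C ->
     #|[set u in V | adj v u & u \in C]| = a /\
     #|[set u in V | adj v u & u \notin C]| = b) /\
  (forall v, v \in V -> v \notin C ->
     #|[set u in V | adj v u & u \in C]| = c /\
     #|[set u in V | adj v u & u \notin C]| = d).

(* Main.v *)
Require Import Defs.
From mathcomp Require Import all_boot.
Set Implicit Arguments. Unset Strict Implicit. Unset Printing Implicit Defensive.

Definition xs n (I : seq nat) (x : word n.+1) : bool :=
  foldr (fun k acc => x (inord k) (+) acc) false I.

Lemma xs_add n I (x y : word n.+1) : xs I (wadd x y) = xs I x (+) xs I y.
Proof. elim: I => [|a I IH] //=; by rewrite IH ffunE addbACA. Qed.

Lemma xs_cat n I1 I2 (x : word n.+1) : xs (I1 ++ I2) x = xs I1 x (+) xs I2 x.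
Proof. elim: I1 => [|a I IH] //=; by rewrite IH addbA. Qed.

Lemma xs_zero n I : xs I (zero_word n.+1) = false.
Proof. elim: I => [|a I IH] //=; by rewrite IH ffunE. Qed.

Definition e1 n (i : 'I_n) : word n := [ffun k => k == i].

Lemma xs_e1 n (i : 'I_n.+1) I : all (gtn n.+1) I -> xs I (e1 i) = odd (count_mem (val i) I).
Proof.
elim: I => [|a I IH] //= /andP [Ha HI]; rewrite IH // ffunE oddD.
by rewrite -(inj_eq val_inj) /= inordK // oddb.
Qed.

Lemma odd_sum_xs n (x : word n.+1) I :
  odd (\sum_(i <- I) (if x (inord i) then 1 else 0)) = xs I x.
Proof.
elim: I => [|a I IH]; first by rewrite big_nil.
by rewrite big_cons oddD IH /=; case: (x (inord a)).
Qed.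

Lemma odd_wt n (x : word n.+1) : odd (wt x) = xs (iota 0 n.+1) x.
Proof.
rewrite /wt -sum1_card big_mkcond /=.
have -> : \sum_(i < n.+1) (if i \in [set i | x i] then 1 else 0) =
          \sum_(i < n.+1) (fun k => if x (inord k) then 1 else 0) i.
  by apply: eq_bigr => i _; rewrite inE inord_val.
rewrite -(big_mkord xpredT (fun k => if x (inord k) then 1 else 0)) /index_iota subn0.
exact: odd_sum_xs.
Qed.

Lemma cat3E x y w (k : nat) : k < 24 -> cat3 x y w (inord k) =
  if k < 8 then x (inord k) else if k < 16 then y (inord (k - 8)) else w (inord (k - 16)).
Proof. by move=> Hk; rewrite ffunE !inordK. Qed.

Lemma xs_cat3_0 x y w I : all (gtn 8) I -> xs I (cat3 x y w) = xs I x.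
Proof.
elim: I => [|a I IH] //= /andP [Ha HI]; rewrite IH // cat3E ?Ha //.
exact: (leq_trans Ha).
Qed.

Lemma xs_cat3_8 x y w I : all (gtn 8) I -> xs (map (addn 8) I) (cat3 x y w) = xs I y.
Proof.
elim: I => [|a I IH] //= /andP [Ha HI]; rewrite IH // cat3E; last first.
  by rewrite -[24]/(8+16) ltn_add2l (leq_trans Ha).
by rewrite ltnNge leq_addr /= -[16]/(8+8) ltn_add2l Ha addKn.
Qed.

Lemma xs_cat3_16 x y w I : all (gtn 8) I -> xs (map (addn 16) I) (cat3 x y w) = xs I w.
Proof.
elim: I => [|a I IH] //= /andP [Ha HI]; rewrite IH // cat3E; last first.
  by rewrite -[24]/(16+8) ltn_add2l.
rewrite ltnNge (leq_trans _ (leq_addr a 16)) // ltnNge leq_addr /= addKn //.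
Qed.

Definition blk (v : word 24) (o : nat) : word 8 := [ffun i : 'I_8 => v (inord (o + i))].

Lemma xs_blk v o I : all (gtn 8) I -> xs I (blk v o) = xs (map (addn o) I) v.
Proof.
elim: I => [|a I IH] //= /andP [Ha HI]; by rewrite IH // ffunE inordK.
Qed.

Lemma blk_cat3 v : v = cat3 (blk v 0) (blk v 8) (blk v 16).
Proof.
apply/ffunP => i; rewrite !ffunE.
case: ifP => H1; first by rewrite inordK // add0n inord_val.
have H8 : 8 <= i by rewrite leqNgt H1.
case: ifP => H2.
  have Hs : i - 8 < 8 by rewrite ltn_psubLR.
  by rewrite inordK // subnKC // inord_val.
have H16 : 16 <= i by rewrite leqNgt H2.
have Hs : i - 16 < 8 by rewrite ltn_psubLR.
by rewrite inordK // subnKC // inord_val.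
Qed.

Lemma waddK8 (y z : word 8) : wadd y (wadd y z) = z.
Proof. by apply/ffunP => i; rewrite !ffunE addbA addbb. Qed.

Definition Ir (r : nat) : seq nat :=
  match r with 0 => iota 0 8 | 1 => [:: 2; 4; 5; 6] | 2 => [:: 1; 3; 4; 5] | 3 => [:: 0; 2; 3; 4] | _ => [::] end.

Lemma Ir_lt r : all (gtn 8) (Ir r).
Proof. by case: r => [|[|[|[|r]]]]. Qed.

Definition chk (z : word 8) : bool := all (fun r => ~~ xs (Ir r) z) (iota 0 4).

Lemma chk_add x y : chk x -> chk y -> chk (wadd x y).
Proof.
move=> /allP Hx /allP Hy; apply/allP => r Hr.
by rewrite xs_add; move: (Hx r Hr) (Hy r Hr); do 2 case: (xs _ _).
Qed.

Lemma chk_zero : chk (zero_word 8).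
Proof. by apply/allP => r _; rewrite xs_zero. Qed.

Lemma chk_span gs m : all chk gs -> chk (foldr (@wadd 8) (zero_word 8) (mask m gs)).
Proof.
elim: gs m => [|g gs IH] [|b m] /=; try (move=> _; exact: chk_zero).
move=> /andP [Hg Hgs].
case: b => /=; [apply: chk_add => //|]; exact: IH.
Qed.

Lemma cyc_genE (k : 'I_7) a : a < 8 -> cyc_gen k (inord a) =
  if a < 7 then nth false gen_base ((a + k) %% 7) else false.
Proof. by move=> Ha; rewrite ffunE inordK. Qed.

Lemma enum7 : enum 'I_7 = map inord (iota 0 7).
Proof.
rewrite -val_enum_ord -map_comp -[LHS]map_id; apply: eq_map => k /=.
by rewrite inord_val.
Qed.

Lemma gensE : gens = all_ones 8 :: map cyc_gen (map inord (iota 0 7)).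
Proof. by rewrite /gens enum7. Qed.

Lemma chk_gens : all chk gens.
Proof.
rewrite /gens /=; apply/andP; split.
  by rewrite /chk /= !ffunE.
apply/allP => g /mapP [k _ ->].
case: k => [[|[|[|[|[|[|[|//]]]]]]] Hk];
by rewrite /chk /= !cyc_genE.
Qed.

Lemma span_eval (m : seq bool) (gs : seq (word 8)) i :
  (foldr (@wadd 8) (zero_word 8) (mask m gs)) i =
  foldr (fun (p : bool * word 8) acc => (p.1 && p.2 i) (+) acc) false (zip m gs).
Proof.
elim: gs m => [|g gs IH] [|b m] /=; rewrite ?ffunE //.
by case: b => /=; rewrite ?ffunE IH.
Qed.

Lemma cyc_genE' j a : j < 7 -> a < 8 -> cyc_gen (inord j) (inord a) =
  if a < 7 then nth false gen_base ((a + j) %% 7) else false.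
Proof. by move=> Hj Ha; rewrite cyc_genE // inordK. Qed.

Lemma C8P z : (z \in C8) = chk z.
Proof.
apply/idP/idP.
  rewrite inE => /existsP [m /eqP ->]; apply: chk_span; exact: chk_gens.
move=> H; rewrite inE; apply/existsP.
set a := z (inord 0) (+) z (inord 1) (+) z (inord 3).
set b := z (inord 0) (+) z (inord 2).
set c := z (inord 0) (+) z (inord 3).
set d := z (inord 1) (+) z (inord 3).
have Hsz : size [:: a; b; c; d; false; false; false; false] == size gens.
  by rewrite /gens /= size_map size_enum_ord.
exists (Tuple Hsz); apply/eqP/ffunP => i.
rewrite span_eval; rewrite [tval _]/= gensE -[i]inord_val.
move: H; rewrite /chk /=.
case: i => [[|[|[|[|[|[|[|[|//]]]]]]]] Hi] /=; rewrite !cyc_genE' // ffunE /= /a /b /c /d;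
move: (z (inord 0)) (z (inord 1)) (z (inord 2)) (z (inord 3)) (z (inord 4))
  (z (inord 5)) (z (inord 6)) (z (inord 7));
by do 8 case.
Qed.

Definition J (r : nat) : seq nat :=
  match r with 0 => iota 0 8 | 1 => map (addn 8) (iota 0 8)
  | r'.+2 => map (addn 8) (Ir r') ++ map (addn 16) (Ir r') end.

Lemma inB x : (x \in B) = ~~ xs (iota 0 8) x.
Proof. by rewrite /B /Even inE odd_wt. Qed.

Lemma LP v : (v \in L) = all (fun r => ~~ xs (J r) v) (iota 0 6).
Proof.
apply/idP/idP.
  rewrite inE => /existsP [x /andP [Hx /existsP [y /andP [Hy /existsP [z /andP [Hz /eqP ->]]]]]].
  apply/allP => r; rewrite mem_iota add0n => /andP [_ Hr].
  case: r Hr => [|[|r]] Hr.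
  - by rewrite xs_cat3_0 // -inB.
  - by rewrite xs_cat3_8 // -inB.
  rewrite /J xs_cat xs_cat3_8 ?Ir_lt // xs_cat3_16 ?Ir_lt // xs_add addbA addbb addFb.
  move: Hz; rewrite C8P => /allP; apply; rewrite mem_iota.
  by rewrite add0n.
move=> /allP H.
have Hr r : r < 6 -> ~~ xs (J r) v by move=> Hr; apply: H; rewrite mem_iota.
rewrite inE; apply/existsP; exists (blk v 0); apply/andP; split.
  by rewrite inB xs_blk //; exact: (Hr 0).
apply/existsP; exists (blk v 8); apply/andP; split.
  by rewrite inB xs_blk //; exact: (Hr 1).
apply/existsP; exists (wadd (blk v 8) (blk v 16)); apply/andP; split.
  rewrite C8P; apply/allP => r; rewrite mem_iota add0n => /andP [_ Hr4].
  rewrite xs_add !xs_blk ?Ir_lt // -xs_cat.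
  exact: (Hr r.+2).
by rewrite waddK8 -blk_cat3.
Qed.

Lemma EvenP v : (v \in Even 24) = ~~ (xs (J 0) v (+) xs (J 2) v).
Proof. by rewrite inE odd_wt -xs_cat. Qed.

Definition f2 (v : word 24) (p : 'I_24 * 'I_24) : word 24 := wadd v (wadd (e1 p.1) (e1 p.2)).

Lemma xs_f2 I v p : all (gtn 24) I ->
  xs I (f2 v p) = xs I v (+) (odd (count_mem (val p.1) I) (+) odd (count_mem (val p.2) I)).
Proof. by move=> HI; rewrite !xs_add !xs_e1. Qed.

Lemma even_f2 v p : (f2 v p \in Even 24) = (v \in Even 24).
Proof.
rewrite !inE !odd_wt xs_f2 ?(count_uniq_mem _ (iota_uniq _ _)) ?mem_iota ?add0n ?leq0n ?ltn_ord //.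
by rewrite andbT oddb addbb addbF.
Qed.

Lemma neqxor (a b : bool) : (a != a (+) b) = b.
Proof. by case: a; case: b. Qed.

Lemma set_f2 (v : word 24) (p : 'I_24 * 'I_24) : p.1 != p.2 -> [set i | v i != f2 v p i] = [set p.1; p.2].
Proof.
move=> Hne; apply/setP => k; rewrite !inE !ffunE neqxor.
case: (eqVneq k p.1) => [->|Hk1] /=; first by rewrite (negbTE Hne).
by [].
Qed.

Lemma f2_of_set (v u : word 24) (x y : 'I_24) : x != y -> [set i | v i != u i] = [set x; y] -> u = f2 v (x, y).
Proof.
move=> Hne Hs; apply/ffunP => k.
move/setP: Hs => /(_ k); rewrite !inE /= !ffunE => E.
have -> : (k == x) (+) (k == y) = (k == x) || (k == y).
  by case: (eqVneq k x) => [->|] //=; rewrite (negbTE Hne).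
by rewrite -E; case: (v k); case: (u k).
Qed.

Lemma f2C (v : word 24) (x y : 'I_24) : f2 v (x, y) = f2 v (y, x).
Proof. by apply/ffunP => k; rewrite !ffunE /= [(_ == x) (+) _]addbC. Qed.

Lemma nbr_card v (P : pred (word 24)) : v \in Even 24 ->
  #|[set u in Even 24 | halved_adj v u & P u]| =
  #|[set p : 'I_24 * 'I_24 | (p.1 < p.2) && P (f2 v p)]|.
Proof.
move=> Hv; rewrite -(card_in_imset (f := f2 v)).
  apply: eq_card => u; rewrite !inE; apply/idP/imsetP.
    move=> /and3P [Hu Hd HP]; move: Hd; rewrite /halved_adj /dist => /cards2P [x [y [Hne Hs]]].
    have Hu2 := f2_of_set Hne Hs.
    case: (ltngtP (val x) (val y)) => Hxy.
    - by exists (x, y); [rewrite inE /= Hxy -Hu2 | exact: Hu2].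
    - by exists (y, x); [rewrite inE /= Hxy -f2C -Hu2 | rewrite -f2C].
    - by move: Hne; rewrite -(inj_eq val_inj) Hxy eqxx.
  move=> [p]; rewrite inE => /andP [Hp HP] ->.
  have Hne : p.1 != p.2 by rewrite -(inj_eq val_inj) /= neq_ltn Hp.
  have He := even_f2 v p; rewrite Hv inE in He.
  by rewrite He HP /halved_adj /dist set_f2 // cards2 Hne.
move=> p q; rewrite !inE => /andP [Hp _] /andP [Hq _] E.
have Hnp : p.1 != p.2 by rewrite -(inj_eq val_inj) /= neq_ltn Hp.
have Hnq : q.1 != q.2 by rewrite -(inj_eq val_inj) /= neq_ltn Hq.
have Hs : [set p.1; p.2] = [set q.1; q.2] by rewrite -(set_f2 v Hnp) -(set_f2 v Hnq) E.
have m1 : p.1 \in [set q.1; q.2] by rewrite -Hs set21.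
have m2 : p.2 \in [set q.1; q.2] by rewrite -Hs set22.
have m3 : q.1 \in [set p.1; p.2] by rewrite Hs set21.
have m4 : q.2 \in [set p.1; p.2] by rewrite Hs set22.
clear E Hs Hnp Hnq; move: m1 m2 m3 m4 Hp Hq; case: p => [p1 p2]; case: q => [q1 q2] /=; rewrite !inE.
move=> /orP[/eqP E1|/eqP E1] /orP[/eqP E2|/eqP E2] /orP[/eqP E3|/eqP E3] /orP[/eqP E4|/eqP E4] Hp Hq;
  subst; try by [].
all: try by rewrite ltnn in Hp.
all: try by rewrite ltnn in Hq.
all: by have := ltn_trans Hp Hq; rewrite ltnn.
Qed.

Definition sum2 (f : nat -> nat -> bool) : nat :=
  foldr (fun i acc => foldr (fun j acc' => (if f i j then 1 else 0) + acc') 0 (iota 0 24) + acc) 0 (iota 0 24).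

Lemma big_foldr (F : nat -> nat) s : \sum_(i <- s) F i = foldr (fun i acc => F i + acc) 0 s.
Proof. by elim: s => [|a s IH]; rewrite ?big_nil ?big_cons ?IH. Qed.

Lemma card_pairs (q : nat -> nat -> bool) :
  #|[set p : 'I_24 * 'I_24 | q p.1 p.2]| = sum2 q.
Proof.
rewrite -sum1_card big_mkcond /=.
rewrite (eq_bigr (fun p : 'I_24 * 'I_24 => (fun i j : 'I_24 => if q i j then 1 else 0) p.1 p.2)); last first.
  by move=> p _; rewrite inE.
rewrite -(pair_bigA _ (fun i j : 'I_24 => if q i j then 1 else 0)) /=.
rewrite -(big_mkord xpredT (fun i => \sum_(j < 24) if q i j then 1 else 0)).
rewrite (eq_bigr (fun i => foldr (fun j acc => (if q i j then 1 else 0) + acc) 0 (iota 0 24))); last first.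
  by move=> i _; rewrite -(big_mkord xpredT (fun j => if q i j then 1 else 0)) big_foldr.
by rewrite big_foldr.
Qed.

Definition Q (s : seq bool) (i j : nat) : bool :=
  all (fun r => ~~ (nth false s r (+) (odd (count_mem i (J r)) (+) odd (count_mem j (J r))))) (iota 0 6).

Lemma comp s0 s1 s2 s3 s4 s5 : s0 (+) s2 = false ->
  sum2 (fun i j => (i < j) && Q [:: s0; s1; s2; s3; s4; s5] i j) = (if ~~ [|| s0, s1, s2, s3, s4 | s5] then 28 else 8) /\
  sum2 (fun i j => (i < j) && ~~ Q [:: s0; s1; s2; s3; s4; s5] i j) = (if ~~ [|| s0, s1, s2, s3, s4 | s5] then 248 else 268).
Proof.
by case: s0; case: s1; case: s2; case: s3; case: s4; case: s5 => //= _; split; vm_compute.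
Qed.

Lemma J_lt r : all (gtn 24) (J r).
Proof. by case: r => [|[|[|[|[|[|r]]]]]]. Qed.

Definition Sv (v : word 24) : seq bool := [seq xs (J r) v | r <- iota 0 6].

Lemma memL_f2 v p : (f2 v p \in L) = Q (Sv v) p.1 p.2.
Proof.
rewrite LP /Q; apply: eq_in_all => r; rewrite mem_iota add0n => /andP [_ Hr].
by rewrite xs_f2 ?J_lt // (nth_map 0) ?size_iota // nth_iota // add0n.
Qed.

Lemma key v : v \in Even 24 ->
  #|[set u in Even 24 | halved_adj v u & u \in L]| = (if v \in L then 28 else 8) /\
  #|[set u in Even 24 | halved_adj v u & u \notin L]| = (if v \in L then 248 else 268).
Proof.
move=> Hv.
have := nbr_card (fun u => u \in L) Hv; rewrite /= => ->.
have := nbr_card (fun u => u \notin L) Hv; rewrite /= => ->.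
have -> : #|[set p : 'I_24 * 'I_24 | (p.1 < p.2) && (f2 v p \in L)]| =
   sum2 (fun i j : nat => (i < j) && Q (Sv v) i j).
  by rewrite -card_pairs; apply: eq_card => p; rewrite [LHS]inE [RHS]inE memL_f2.
have -> : #|[set p : 'I_24 * 'I_24 | (p.1 < p.2) && (f2 v p \notin L)]| =
   sum2 (fun i j : nat => (i < j) && ~~ Q (Sv v) i j).
  by rewrite -card_pairs; apply: eq_card => p; rewrite [LHS]inE [RHS]inE memL_f2.
have -> : Sv v = [:: xs (J 0) v; xs (J 1) v; xs (J 2) v; xs (J 3) v; xs (J 4) v; xs (J 5) v] by [].
have E : all (fun r => ~~ xs (J r) v) (iota 0 6) =
  [&& ~~ xs (J 0) v, ~~ xs (J 1) v, ~~ xs (J 2) v, ~~ xs (J 3) v, ~~ xs (J 4) v & ~~ xs (J 5) v && true] by [].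
have H02 : xs (J 0) v (+) xs (J 2) v = false by apply/negbTE; rewrite -EvenP.
have [-> ->] := comp (xs (J 1) v) (xs (J 3) v) (xs (J 4) v) (xs (J 5) v) H02.
rewrite LP E.
by case: (xs (J 0) v); case: (xs (J 1) v); case: (xs (J 2) v); case: (xs (J 3) v);
   case: (xs (J 4) v); case: (xs (J 5) v).
Qed.

Theorem lemma5 :
  L \subset Even 24 /\
  perfect_coloring (Even 24) (@halved_adj 24) L 28 248 8 268.
Proof.
have sub : L \subset Even 24.
  apply/subsetP => v; rewrite LP EvenP => /allP H.
  by move: (H 0 isT) (H 2 isT) => /negbTE -> /negbTE ->.
split; first exact: sub.
split; first exact: sub.
split.
  by move=> v Hv HL; have := key Hv; rewrite HL.
by move=> v Hv HL; have := key Hv; rewrite (negbTE HL).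
Qed.
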